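(* Let $S=\{x_1,\dots,x_N\}\subset\mathbb{R}^n$ be a two-distance tight frame for $\mathbb{R}^n$ with inner products $a,b$, $a^2\neq b^2$, and let $s=\sum_{i=1}^N x_i$. Then exactly one of the following holds: (i) $s=0$, so $S$ is a spherical $2$-design in $\mathbb{R}^n$; in this case $-n(a+b)-nab(N-1)=N-n$; (ii) $\langle x_i,s\rangle=N/n$ for all $i$ and $\|s\|^2=N^2/n$; the vectors $y_i=\frac{x_i-s/N}{\sqrt{1-1/n}}$, $i=1,\dots,N$, are unit vectors lying in the $(n-1)$-dimensional subspace $s^\perp$, and $\{y_1,\dots,y_N\}$ is a spherical $2$-design in $s^\perp$ (so $S$ lies on a sphere of radius $\sqrt{1-1/n}$ centred at $s/N$); in this case $(N-n)(a+b)-nab(N-1)=N-n$.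
   Context: A two-distance tight frame for $\mathbb{R}^n$ is a finite set of unit vectors $\{x_1,\dots,x_N\}\subset\mathbb{R}^n$ such that there are two real numbers $a\neq b$ with $\langle x_i,x_j\rangle\in\{a,b\}$ for all $i\neq j$, and $\sum_{i=1}^N\langle x,x_i\rangle^2=\frac{N}{n}\|x\|^2$ for all $x\in\mathbb{R}^n$. A set of unit vectors $\{y_1,\dots,y_N\}$ in an $m$-dimensional real inner product space $V$ is a spherical $2$-design in $V$ if $\sum_i y_i=0$ and $\sum_{i,j=1}^N\langle y_i,y_j\rangle^2=N^2/m$ (equivalently, $\sum_i y_i=0$ and $\sum_i\langle x,y_i\rangle^2=\frac{N}{m}\|x\|^2$ for all $x\in V$). *)

(* Defs.v *)
(* R is an arbitrary real closed field (needed for sqrt);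
   vectors of R^n are row vectors 'rV[R]_n; subspaces are row spaces (mxalgebra). *)
From HB Require Import structures.
From mathcomp Require Import all_boot all_order all_algebra.
Set Implicit Arguments.
Unset Strict Implicit.
Unset Printing Implicit Defensive.
Import Order.TTheory GRing.Theory Num.Theory.
Local Open Scope ring_scope.

Definition dot (R : rcfType) (n : nat) (u v : 'rV[R]_n) : R :=
  \sum_(k < n) u 0 k * v 0 k.

Definition two_distance_tight_frame (R : rcfType) (n N : nat)
    (x : 'I_N -> 'rV[R]_n) (a b : R) : Prop :=
  [/\ injective x,                                   (* a set of N vectors *)
      forall i, dot (x i) (x i) = 1,
      a != b,
      forall i j, i != j -> dot (x i) (x j) = a \/ dot (x i) (x j) = b
    & forall v : 'rV[R]_n,
        \sum_(i < N) (dot v (x i)) ^+ 2 = (N%:R / n%:R) * dot v v ].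

Definition spherical_2_design (R : rcfType) (n N : nat) (V : 'M[R]_n)
    (y : 'I_N -> 'rV[R]_n) : Prop :=
  [/\ forall i, (y i <= V)%MS,
      forall i, dot (y i) (y i) = 1,
      \sum_(i < N) y i = 0
    & \sum_(i < N) \sum_(j < N) (dot (y i) (y j)) ^+ 2
        = (N%:R ^+ 2) / (\rank V)%:R ].

Definition orth_compl (R : rcfType) (n : nat) (s : 'rV[R]_n) : 'M[R]_n :=
  kermx s^T.

(* Main.v *)
Require Import Defs.
From HB Require Import structures.
From mathcomp Require Import all_boot all_order all_algebra.
From mathcomp Require Import ring lra.
Import Order.TTheory GRing.Theory Num.Theory.
Local Open Scope ring_scope.

Lemma dotC {R : rcfType} {n : nat} (u v : 'rV[R]_n) : dot u v = dot v u.
Proof. by apply: eq_bigr => k _; rewrite mulrC. Qed.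

Lemma dotDl {R : rcfType} {n : nat} (u w v : 'rV[R]_n) :
  dot (u + w) v = dot u v + dot w v.
Proof. by rewrite /dot -big_split; apply: eq_bigr => k _; rewrite mxE mulrDl. Qed.

Lemma dotBl {R : rcfType} {n : nat} (u w v : 'rV[R]_n) :
  dot (u - w) v = dot u v - dot w v.
Proof. by rewrite /dot -sumrB; apply: eq_bigr => k _; rewrite !mxE mulrBl. Qed.

Lemma dotZl {R : rcfType} {n : nat} (c : R) (u v : 'rV[R]_n) :
  dot (c *: u) v = c * dot u v.
Proof. by rewrite /dot mulr_sumr; apply: eq_bigr => k _; rewrite mxE mulrA. Qed.

Lemma dot0l {R : rcfType} {n : nat} (v : 'rV[R]_n) : dot 0 v = 0.
Proof. by rewrite /dot big1 // => k _; rewrite mxE mul0r. Qed.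

Lemma dotDr {R : rcfType} {n : nat} (u w v : 'rV[R]_n) :
  dot v (u + w) = dot v u + dot v w.
Proof. by rewrite dotC dotDl !(dotC v). Qed.

Lemma dotBr {R : rcfType} {n : nat} (u w v : 'rV[R]_n) :
  dot v (u - w) = dot v u - dot v w.
Proof. by rewrite dotC dotBl !(dotC v). Qed.

Lemma dotZr {R : rcfType} {n : nat} (c : R) (u v : 'rV[R]_n) :
  dot v (c *: u) = c * dot v u.
Proof. by rewrite dotC dotZl dotC. Qed.

Lemma dot0r {R : rcfType} {n : nat} (v : 'rV[R]_n) : dot v 0 = 0.
Proof. by rewrite dotC dot0l. Qed.

Lemma dot_suml {R : rcfType} {n N : nat} (f : 'I_N -> 'rV[R]_n) v :
  dot (\sum_(i < N) f i) v = \sum_(i < N) dot (f i) v.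
Proof.
exact: (big_morph (fun u => dot u v) (fun u w => dotDl u w v) (dot0l v)).
Qed.

Lemma dot_sumr {R : rcfType} {n N : nat} (f : 'I_N -> 'rV[R]_n) v :
  dot v (\sum_(i < N) f i) = \sum_(i < N) dot v (f i).
Proof. by rewrite dotC dot_suml; apply: eq_bigr => i _; rewrite dotC. Qed.

Lemma dot_eq0 {R : rcfType} {n : nat} (v : 'rV[R]_n) : dot v v = 0 -> v = 0.
Proof.
move=> H; apply/rowP => k; rewrite mxE.
have H0 : forall i : 'I_n, predT i -> 0 <= v 0 i * v 0 i by move=> i _; by rewrite -expr2 sqr_ge0.
rewrite /dot in H; have := psumr_eq0P H0 H; move=> /(_ k isT).
by move/eqP; rewrite -expr2 sqrf_eq0 => /eqP.
Qed.

Lemma mul_tr_dot {R : rcfType} {n : nat} (u v : 'rV[R]_n) :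
  u *m v^T = (dot u v)%:M.
Proof.
apply/matrixP => p q; rewrite !ord1 !mxE eqxx mulr1n.
by apply: eq_bigr => k _; rewrite mxE.
Qed.

Theorem proposition3p1 (R : rcfType) (n N : nat) (x : 'I_N -> 'rV[R]_n)
    (a b : R) :
  (0 < n)%N -> (1 < N)%N ->
  two_distance_tight_frame x a b ->
  a ^+ 2 != b ^+ 2 ->
  let s := \sum_(i < N) x i in
  let y := fun i => (Num.sqrt (1 - n%:R^-1))^-1 *: (x i - N%:R^-1 *: s) in
  let P1 :=
    [/\ s = 0,
        spherical_2_design 1%:M x
      & - n%:R * (a + b) - n%:R * a * b * (N%:R - 1) = N%:R - n%:R] in
  let P2 :=
    (forall i, dot (x i) s = N%:R / n%:R) /\
    dot s s = N%:R ^+ 2 / n%:R /\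
    (forall i, dot (y i) (y i) = 1) /\
    (forall i, (y i <= orth_compl s)%MS) /\
    \rank (orth_compl s) = n.-1 /\
    spherical_2_design (orth_compl s) y /\
    (forall i, dot (x i - N%:R^-1 *: s) (x i - N%:R^-1 *: s) = 1 - n%:R^-1) /\
    (N%:R - n%:R) * (a + b) - n%:R * a * b * (N%:R - 1) = N%:R - n%:R in
  (P1 /\ ~ P2) \/ (~ P1 /\ P2).
Proof.
move=> Hn HN [xinj xunit hab xab xtight] hab2 s y P1 P2.
pose c : R := N%:R / n%:R.
have nR0 : n%:R != 0 :> R by rewrite pnatr_eq0 -lt0n.
have NR0 : N%:R != 0 :> R by rewrite pnatr_eq0 -lt0n ltnW.
have c0 : c != 0 by rewrite /c mulf_eq0 invr_eq0 negb_or NR0 nR0.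
have bil : forall v w, \sum_(i < N) dot v (x i) * dot w (x i) = c * dot v w.
  move=> v w.
  have E := xtight (v + w); have Ev := xtight v; have Ew := xtight w.
  rewrite -/c in E Ev Ew.
  have : \sum_(i < N) (dot (v + w) (x i)) ^+ 2 = \sum_(i < N) (dot v (x i)) ^+ 2
      + \sum_(i < N) (dot w (x i)) ^+ 2 + 2 * \sum_(i < N) dot v (x i) * dot w (x i).
    rewrite mulr_sumr -!big_split /=; apply: eq_bigr => i _; rewrite dotDl; ring.
  rewrite E Ev Ew !dotDl !dotDr (dotC w v).
  set A := \sum_(i < N) _.
  move=> H.
  have H2 : 2 * A = 2 * (c * dot v w) by rewrite -[2 * A](addKr (c * dot v v + c * dot w w)); rewrite -H; ring.
  by apply: (mulfI _ H2); rewrite pnatr_eq0.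
have Gsq : forall i, \sum_(j < N) (dot (x i) (x j)) ^+ 2 = c.
  by move=> i; rewrite xtight xunit mulr1.
have key : forall i, c - (a + b) * dot (x i) s + a * b * N%:R - (1 - a) * (1 - b) = 0.
  move=> i.
  have : \sum_(j < N) ((dot (x i) (x j)) ^+ 2 - (a + b) * dot (x i) (x j) + a * b)
         = (1 - a) * (1 - b).
    rewrite (bigD1 i) //= xunit big1 ?addr0; first by ring.
    move=> j /= ji; have ij : i != j by rewrite eq_sym.
    by case: (xab i j ij) => ->; ring.
  rewrite big_split sumrB /= -mulr_sumr Gsq sumr_const card_ord -dot_sumr.
  by move=> H; rewrite -H /s mulr_natr; ring.
have ab0 : a + b != 0.
  apply: contra_neq hab2 => e; apply/eqP; rewrite -subr_eq0.
  have -> : a ^+ 2 - b ^+ 2 = (a - b) * (a + b) by ring.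
  by rewrite e mulr0.
pose i0 : 'I_N := Ordinal (ltnW HN).
pose i1 : 'I_N := Ordinal HN.
pose r := dot (x i0) s.
have rconst : forall i, dot (x i) s = r.
  move=> i; apply: (mulfI ab0).
  have H0 := key i0; have Hi := key i.
  apply/eqP; rewrite -subr_eq0; apply/eqP.
  rewrite (_ : _ - _ = (c - (a + b) * r + a * b * N%:R - (1 - a) * (1 - b))
     - (c - (a + b) * dot (x i) s + a * b * N%:R - (1 - a) * (1 - b))).
    by rewrite H0 Hi subrr.
  ring.
have rr : r * r = c * r.
  rewrite -(bil (x i0) s).
  rewrite (eq_bigr (fun j => dot (x i0) (x j) * r)); last by move=> j _; rewrite (dotC s) rconst.
  by rewrite -mulr_suml -dot_sumr.
have ss : dot s s = N%:R * r.
  rewrite {1}/s dot_suml (eq_bigr (fun=> r)) ?sumr_const ?card_ord ?mulr_natl //.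
have [r0|rc] : r = 0 \/ r = c.
  have : r * (r - c) == 0 by rewrite mulrBr rr mulrC subrr.
  by rewrite mulf_eq0 subr_eq0 => /orP[/eqP|/eqP]; auto.
- have s0 : s = 0 by apply: dot_eq0; rewrite ss r0 mulr0.
  left; split.
  + rewrite /P1; split => //.
    * split => //.
      - by move=> i; exact: submx1.
      - rewrite (eq_bigr (fun=> c)) ?sumr_const ?card_ord ?mxrank1; last by move=> i _; exact: Gsq.
        by rewrite /c -mulr_natl; field.
    * have K := key i0; rewrite -/r r0 in K.
      apply/eqP; rewrite -subr_eq0; apply/eqP; rewrite -[RHS](mulr0 (- n%:R)) -K /c.
      by field.
  + rewrite /P2 => [[_ [Hss _]]]; move: Hss; rewrite s0 dot0l => /esym/eqP.
    by rewrite mulf_eq0 invr_eq0 sqrf_eq0 (negbTE NR0) (negbTE nR0).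
- right; split.
  + rewrite /P1 => [[s0 _ _]]; have := rconst i0; rewrite s0 dot0r rc => /esym/eqP.
    by rewrite (negbTE c0).
  + have dij : forall i j, dot (x i - N%:R^-1 *: s) (x j - N%:R^-1 *: s)
        = dot (x i) (x j) - n%:R^-1.
      move=> i j; rewrite !dotBl !dotBr !dotZl !dotZr rconst (dotC s (x j)) rconst ss rc /c.
      by field; apply/andP; split.
    have n1 : (1 < n)%N.
      rewrite ltn_neqAle Hn andbT; apply/negP => /eqP n1'.
      have dz : forall i, x i - N%:R^-1 *: s = 0.
        by move=> i; apply: dot_eq0; rewrite dij xunit -n1' invr1 subrr.
      have : x i0 = x i1.
        apply/eqP; rewrite -subr_eq0.
        have -> : x i0 - x i1 = (x i0 - N%:R^-1 *: s) - (x i1 - N%:R^-1 *: s).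
          by rewrite opprB addrA subrK.
        by rewrite !dz subrr.
      by move/xinj/(congr1 val).
    have tpos : 0 < 1 - n%:R^-1 :> R.
      by rewrite subr_gt0 invf_lt1 ?ltr1n // ltr0n.
    have t0 : 1 - n%:R^-1 != 0 :> R by rewrite gt_eqF.
    have n10 : n%:R - 1 != 0 :> R.
      by rewrite subr_eq0 pnatr_eq1 gtn_eqF.
    pose k := (Num.sqrt (1 - n%:R^-1 : R))^-1.
    have k2 : k ^+ 2 * (1 - n%:R^-1) = 1.
      rewrite /k exprVn sqr_sqrtr ?ltW //; exact: mulVf.
    have k2' : k ^+ 2 = (1 - n%:R^-1)^-1.
      by apply: (mulIf t0); rewrite k2 mulVf.
    have yij : forall i j, dot (y i) (y j) = k ^+ 2 * (dot (x i) (x j) - n%:R^-1).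
      by move=> i j; rewrite /y -/k dotZl dotZr dij; ring.
    have sn0 : s != 0.
      apply/eqP => s0; have := rconst i0; rewrite s0 dot0r rc => /esym/eqP.
      by rewrite (negbTE c0).
    have yorth : forall i, (y i <= orth_compl s)%MS.
      move=> i; apply/sub_kermxP; rewrite mul_tr_dot.
      have -> : dot (y i) s = 0.
        rewrite /y -/k dotZl dotBl dotZl rconst ss rc /c.
        by field; repeat (apply/andP; split).
      exact: raddf0.
    have rk : \rank (orth_compl s) = n.-1.
      by rewrite /orth_compl mxrank_ker mxrank_tr rank_rV sn0 subn1.
    have yunit : forall i, dot (y i) (y i) = 1.
      by move=> i; rewrite yij xunit.
    split; first by move=> i; rewrite rconst rc.
    split; first by rewrite ss rc /c; field.
    split; first exact: yunit.
    split; first exact: yorth.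
    split; first exact: rk.
    split.
      split.
      * exact: yorth.
      * exact: yunit.
      * rewrite /y -/k -scaler_sumr sumrB sumr_const card_ord -/s scalerMnl.
        by rewrite -mulr_natr mulVf // scale1r subrr scaler0.
      * have inner : forall i, \sum_(j < N) (dot (y i) (y j)) ^+ 2
            = k ^+ 2 ^+ 2 * (c - 2 * n%:R^-1 * c + N%:R * n%:R^-1 ^+ 2).
          move=> i.
          rewrite (eq_bigr (fun j => k ^+ 2 ^+ 2 * (dot (x i) (x j)) ^+ 2
             - (k ^+ 2 ^+ 2 * 2 * n%:R^-1) * dot (x i) (x j) + k ^+ 2 ^+ 2 * n%:R^-1 ^+ 2));
            last by move=> j _; rewrite yij; ring.
          rewrite !big_split /= sumrN -!mulr_sumr Gsq -dot_sumr rconst sumr_const card_ord.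
          by rewrite rc -mulr_natr; ring.
        rewrite (eq_bigr _ (fun i _ => inner i)) sumr_const card_ord rk.
        rewrite k2' /c -mulr_natr -subn1 natrB //.
        by field; repeat (apply/andP; split).
    split; first by move=> i; rewrite dij xunit.
    have K := key i0; rewrite -/r rc in K.
    apply/eqP; rewrite -subr_eq0; apply/eqP; rewrite -[RHS](mulr0 (- n%:R)) -K /c.
    by field; repeat (apply/andP; split).
Qed.
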